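(* Let $A\in\mathbb{C}^{m\times n}$ have rank $r$, $B\in\mathbb{C}^{m\times n}$ have rank $s$, and $E=B-A$. Then $$\|B^{\dagger}-A^{\dagger}\|_{F}^{2}\leq\min\big\{\gamma_{1}+\|B^{\dagger}EA^{\dagger}\|_{F}^{2},\ \gamma_{2}+\|A^{\dagger}EB^{\dagger}\|_{F}^{2}\big\},$$ where $$\gamma_{1}:=\|A^{\dagger}\|_{2}^{2}\Big(\|A^{\dagger}E\|_{F}^{2}-\frac{\|A^{\dagger}EB^{\dagger}\|_{F}^{2}}{\|B^{\dagger}\|_{2}^{2}}\Big)+\|B^{\dagger}\|_{2}^{2}\Big(\|EB^{\dagger}\|_{F}^{2}-\frac{\|A^{\dagger}EB^{\dagger}\|_{F}^{2}}{\|A^{\dagger}\|_{2}^{2}}\Big),$$ $$\gamma_{2}:=\|A^{\dagger}\|_{2}^{2}\Big(\|EA^{\dagger}\|_{F}^{2}-\frac{\|B^{\dagger}EA^{\dagger}\|_{F}^{2}}{\|B^{\dagger}\|_{2}^{2}}\Big)+\|B^{\dagger}\|_{2}^{2}\Big(\|B^{\dagger}E\|_{F}^{2}-\frac{\|B^{\dagger}EA^{\dagger}\|_{F}^{2}}{\|A^{\dagger}\|_{2}^{2}}\Big).$$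
   Context: $M^{\dagger}$ denotes the Moore–Penrose inverse of $M$, $\|\cdot\|_{2}$ the spectral norm and $\|\cdot\|_{F}$ the Frobenius norm. *)

(* Defs.v *)
From HB Require Import structures.
From mathcomp Require Import all_boot all_order all_algebra.
From mathcomp Require Import complex.
From mathcomp Require Import boolp classical_sets reals.
Set Implicit Arguments. Unset Strict Implicit. Unset Printing Implicit Defensive.
Import Order.TTheory GRing.Theory Num.Theory.
Local Open Scope ring_scope.
Local Open Scope classical_set_scope.

Section Defs.
Variable R : realType.
Local Notation C := R[i].

Definition ctrmx (m n : nat) (M : 'M[C]_(m, n)) : 'M[C]_(n, m) :=
  (map_mx Num.conj M)^T.

Definition is_MP_inverse (m n : nat) (A : 'M[C]_(m, n)) (X : 'M[C]_(n, m)) : Prop :=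
  [/\ A *m X *m A = A, X *m A *m X = X,
      ctrmx (A *m X) = A *m X & ctrmx (X *m A) = X *m A].

(* Moore-Penrose inverse A^dagger (it exists and is unique; xget picks it) *)
Definition pinv (m n : nat) (A : 'M[C]_(m, n)) : 'M[C]_(n, m) :=
  xget 0 (is_MP_inverse A).

Definition frobnorm (m n : nat) (M : 'M[C]_(m, n)) : R :=
  Num.sqrt (\sum_(i < m) \sum_(j < n) (ComplexField.Normc.normc (M i j)) ^+ 2).

Definition vnorm (n : nat) (x : 'cV[C]_n) : R :=
  Num.sqrt (\sum_(i < n) (ComplexField.Normc.normc (x i 0)) ^+ 2).

Definition specnorm (m n : nat) (M : 'M[C]_(m, n)) : R :=
  sup [set vnorm (M *m x) | x in [set x : 'cV[C]_n | vnorm x <= 1]].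

End Defs.

(* Main.v *)
Require Import Defs.
From HB Require Import structures.
From mathcomp Require Import all_boot all_order all_algebra.
From mathcomp Require Import complex.
From mathcomp Require Import boolp classical_sets reals.
From mathcomp Require Import ring lra.
Set Implicit Arguments. Unset Strict Implicit. Unset Printing Implicit Defensive.
Import Order.TTheory GRing.Theory Num.Theory.
Local Open Scope ring_scope.

Section Aux.
Variable R : realType.
Local Notation C := R[i].
Local Notation adj := (@ctrmx R _ _).

Lemma adjE m n (M : 'M[C]_(m, n)) i j : adj M i j = Num.conj (M j i).
Proof. by rewrite /ctrmx !mxE. Qed.

Lemma adjK m n (M : 'M[C]_(m, n)) : adj (adj M) = M.
Proof. by apply/matrixP => i j; rewrite !adjE conjCK. Qed.

Lemma adj_mul m n p (M : 'M[C]_(m, n)) (N : 'M[C]_(n, p)) :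
  adj (M *m N) = adj N *m adj M.
Proof.
apply/matrixP => i j; rewrite adjE !mxE rmorph_sum; apply: eq_bigr => k _.
by rewrite rmorphM !adjE mulrC.
Qed.

Lemma adjD m n (M N : 'M[C]_(m, n)) : adj (M + N) = adj M + adj N.
Proof. by apply/matrixP => i j; rewrite !mxE rmorphD. Qed.

Lemma adjN m n (M : 'M[C]_(m, n)) : adj (- M) = - adj M.
Proof. by apply/matrixP => i j; rewrite !mxE rmorphN. Qed.

Lemma adjB m n (M N : 'M[C]_(m, n)) : adj (M - N) = adj M - adj N.
Proof. by rewrite adjD adjN. Qed.

Lemma adj1 n : adj (1%:M : 'M[C]_n) = 1%:M.
Proof.
apply/matrixP => i j; rewrite !mxE eq_sym.
by case: (i == j); rewrite /= ?rmorph1 ?rmorph0.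
Qed.

Lemma adj0 m n : adj (0 : 'M[C]_(m, n)) = 0.
Proof. by apply/matrixP => i j; rewrite !mxE rmorph0. Qed.

Lemma adjZ m n (c : C) (M : 'M[C]_(m, n)) : adj (c *: M) = Num.conj c *: adj M.
Proof. by apply/matrixP => i j; rewrite !mxE rmorphM. Qed.

Lemma tr_adj n (M : 'M[C]_n) : \tr (adj M) = Num.conj (\tr M).
Proof. by rewrite /mxtrace rmorph_sum; apply: eq_bigr => i _; rewrite adjE. Qed.

Lemma adj_inv n (M : 'M[C]_n) : adj (invmx M) = invmx (adj M).
Proof. by rewrite /ctrmx map_invmx trmx_inv. Qed.

Lemma unitmx_adj n (M : 'M[C]_n) : (adj M \in unitmx) = (M \in unitmx).
Proof. by rewrite /ctrmx unitmx_tr map_unitmx. Qed.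


Definition fro m n (M : 'M[C]_(m, n)) : C := \tr (M *m adj M).

Lemma fro_sum m n (M : 'M[C]_(m, n)) :
  fro M = \sum_i \sum_j M i j * Num.conj (M i j).
Proof.
rewrite /fro /mxtrace; apply: eq_bigr => i _; rewrite mxE.
by apply: eq_bigr => j _; rewrite adjE.
Qed.

Lemma frob_fro m n (M : 'M[C]_(m, n)) : ((frobnorm M ^+ 2)%:C)%C = fro M.
Proof.
rewrite /frobnorm sqr_sqrtr; last first.
  by apply: sumr_ge0 => i _; apply: sumr_ge0 => j _; exact: sqr_ge0.
rewrite fro_sum rmorph_sum; apply: eq_bigr => i _.
rewrite rmorph_sum; apply: eq_bigr => j _.
by rewrite rmorphXn /=; exact: sqr_normc.
Qed.

Lemma fro_eq0 m n (M : 'M[C]_(m, n)) : fro M = 0 -> M = 0.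
Proof.
rewrite fro_sum => /eqP; rewrite psumr_eq0; last first.
  by move=> i _; apply: sumr_ge0 => j _; exact: mulcJ_ge0.
move=> /allP H; apply/matrixP => i j; rewrite mxE.
have := H i (mem_index_enum i); rewrite implyTb psumr_eq0; last first.
  by move=> k _; exact: mulcJ_ge0.
move=> /allP /(_ j (mem_index_enum j)); rewrite implyTb mulf_eq0.
by case/orP => /eqP //; move/eqP; rewrite conjC_eq0 => /eqP.
Qed.

Lemma fro_pyth m n (X Y : 'M[C]_(m, n)) :
  \tr (X *m adj Y) = 0 -> fro (X + Y) = fro X + fro Y.
Proof.
move=> h; rewrite /fro adjD mulmxDl !mulmxDr !mxtraceD h.
have -> : \tr (Y *m adj X) = 0.
  by rewrite -[Y in \tr (Y *m _)]adjK -adj_mul tr_adj h rmorph0.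
by rewrite add0r addr0.
Qed.

Lemma fro_pyth2 m n (X Y : 'M[C]_(m, n)) :
  adj Y *m X = 0 -> fro (X + Y) = fro X + fro Y.
Proof. by move=> h; apply: fro_pyth; rewrite mxtrace_mulC h mxtrace0. Qed.

Lemma fro_pyth1 m n (X Y : 'M[C]_(m, n)) :
  X *m adj Y = 0 -> fro (X + Y) = fro X + fro Y.
Proof. by move=> h; apply: fro_pyth; rewrite h mxtrace0. Qed.

Lemma fro_adj m n (M : 'M[C]_(m, n)) : fro (adj M) = fro M.
Proof. by rewrite /fro adjK mxtrace_mulC. Qed.

Lemma fro_N m n (M : 'M[C]_(m, n)) : fro (- M) = fro M.
Proof. by rewrite /fro adjN mulNmx mulmxN opprK. Qed.

Lemma fro_cols m n (M : 'M[C]_(m, n)) : fro M = \sum_j fro (col j M).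
Proof.
rewrite fro_sum exchange_big; apply: eq_bigr => j _.
rewrite fro_sum; apply: eq_bigr => i _; rewrite big_ord1 !mxE //.
Qed.

Definition f2 m n (M : 'M[C]_(m, n)) : R := frobnorm M ^+ 2.

Lemma f2C m n (M : 'M[C]_(m, n)) : ((f2 M)%:C)%C = fro M.
Proof. exact: frob_fro. Qed.

Lemma f2_ge0 m n (M : 'M[C]_(m, n)) : 0 <= f2 M.
Proof. exact: sqr_ge0. Qed.

Lemma f2_adj m n (M : 'M[C]_(m, n)) : f2 (adj M) = f2 M.
Proof. by apply: (@complexI R); rewrite !f2C fro_adj. Qed.

Lemma f2_N m n (M : 'M[C]_(m, n)) : f2 (- M) = f2 M.
Proof. by apply: (@complexI R); rewrite !f2C fro_N. Qed.

Lemma f2_pyth1 m n (X Y : 'M[C]_(m, n)) :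
  X *m adj Y = 0 -> f2 (X + Y) = f2 X + f2 Y.
Proof. by move=> h; apply: (@complexI R); rewrite f2C fro_pyth1 // -!f2C rmorphD. Qed.

Lemma f2_pyth2 m n (X Y : 'M[C]_(m, n)) :
  adj Y *m X = 0 -> f2 (X + Y) = f2 X + f2 Y.
Proof. by move=> h; apply: (@complexI R); rewrite f2C fro_pyth2 // -!f2C rmorphD. Qed.

Lemma f2_cols m n (M : 'M[C]_(m, n)) : f2 M = \sum_j f2 (col j M).
Proof.
apply: (@complexI R); rewrite f2C fro_cols rmorph_sum.
by apply: eq_bigr => j _; rewrite -f2C.
Qed.

Lemma vnorm_frob n (x : 'cV[C]_n) : vnorm x = frobnorm x.
Proof.
rewrite /vnorm /frobnorm; congr (Num.sqrt _); apply: eq_bigr => i _.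
by rewrite big_ord1.
Qed.


Lemma normc_ge0 (z : C) : 0 <= ComplexField.Normc.normc z.
Proof. by case: z => a b; exact: sqrtr_ge0. Qed.

Lemma frob_ge0 m n (M : 'M[C]_(m, n)) : 0 <= frobnorm M.
Proof. exact: sqrtr_ge0. Qed.

Lemma frob_sqrt m n (M : 'M[C]_(m, n)) : frobnorm M = Num.sqrt (f2 M).
Proof. by rewrite /f2 sqrtr_sqr ger0_norm // frob_ge0. Qed.

Lemma conj_realC (c : R) : Num.conj ((c%:C)%C : C) = (c%:C)%C.
Proof. exact: conjc_real. Qed.

Lemma f2Z m n (c : R) (M : 'M[C]_(m, n)) : f2 ((c%:C)%C *: M) = c ^+ 2 * f2 M.
Proof.
apply: (@complexI R); rewrite f2C /fro adjZ conj_realC -scalemxAl -scalemxAr.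
by rewrite !mxtraceZ -/(fro M) -f2C [in RHS]rmorphM [in RHS]rmorphXn expr2 mulrA.
Qed.

Lemma frobZ m n (c : R) (M : 'M[C]_(m, n)) :
  0 <= c -> frobnorm ((c%:C)%C *: M) = c * frobnorm M.
Proof.
move=> c0; rewrite !frob_sqrt f2Z sqrtrM ?sqr_ge0 //.
by rewrite sqrtr_sqr ger0_norm.
Qed.

Lemma f2_eq0 m n (M : 'M[C]_(m, n)) : f2 M = 0 -> M = 0.
Proof. by move=> h; apply: fro_eq0; rewrite -f2C h. Qed.

Lemma frob0 m n : frobnorm (0 : 'M[C]_(m, n)) = 0.
Proof.
rewrite frob_sqrt; suff -> : f2 (0 : 'M[C]_(m, n)) = 0 by rewrite sqrtr0.
by apply: (@complexI R); rewrite f2C /fro adj0 mul0mx mxtrace0.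
Qed.

Definition specset m n (M : 'M[C]_(m, n)) :=
  [set vnorm (M *m x) | x in [set x : 'cV[C]_n | vnorm x <= 1]]%classic.

Lemma spec_ub m n (M : 'M[C]_(m, n)) : has_ubound (specset M).
Proof.
exists (Num.sqrt (\sum_i (\sum_j ComplexField.Normc.normc (M i j)) ^+ 2)).
move=> y [x /= hx <-].
have hx2 : \sum_k ComplexField.Normc.normc (x k 0) ^+ 2 <= 1.
  have h0 : 0 <= vnorm x by exact: sqrtr_ge0.
  have : vnorm x ^+ 2 <= 1 by nra.
  rewrite /vnorm sqr_sqrtr //.
  by apply: sumr_ge0 => k _; exact: sqr_ge0.
have hxj : forall j, ComplexField.Normc.normc (x j 0) <= 1.
  move=> j; have h0 := normc_ge0 (x j 0).
  have : ComplexField.Normc.normc (x j 0) ^+ 2 <= 1.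
    apply: le_trans hx2; rewrite (bigD1 j) //= lerDl.
    by apply: sumr_ge0 => k _; exact: sqr_ge0.
  by move=> h; nra.
have hrow : forall i, ComplexField.Normc.normc ((M *m x) i 0)
                      <= \sum_j ComplexField.Normc.normc (M i j).
  move=> i; rewrite -lecR rmorph_sum /= mxE.
  change (`|\sum_j M i j * x j 0| <= \sum_(j < n) `|M i j|).
  apply: le_trans (ler_norm_sum _ _ _) _; apply: ler_sum => j _.
  rewrite normrM; apply: ler_piMr => //.
  have := hxj j; rewrite -lecR rmorph1; exact.
rewrite /vnorm; apply: ler_wsqrtr; apply: ler_sum => i _.
have h0 := normc_ge0 ((M *m x) i 0); have := hrow i; move=> h; nra.
Qed.

Lemma spec_bound m n (M : 'M[C]_(m, n)) (x : 'cV[C]_n) :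
  vnorm (M *m x) <= specnorm M * vnorm x.
Proof.
have [->|xn0] := eqVneq x 0.
  by rewrite mulmx0 !vnorm_frob !frob0 mulr0.
have t0 : 0 < vnorm x.
  rewrite lt_def sqrtr_ge0 andbT; apply/eqP => h; move: xn0.
  rewrite vnorm_frob frob_sqrt in h; move/eqP: h; rewrite sqrtr_eq0 => h.
  have hf : f2 x = 0 by apply/le_anti; rewrite h f2_ge0.
  by rewrite (f2_eq0 hf) eqxx.
set t := vnorm x.
have hy : vnorm (M *m ((t^-1)%:C%C *: x)) <= specnorm M.
  apply: ub_le_sup; first exact: spec_ub.
  exists ((t^-1)%:C%C *: x) => //=.
  by rewrite vnorm_frob frobZ ?invr_ge0 ?(ltW t0) // -vnorm_frob -/t mulVf ?gt_eqF.
move: hy; rewrite -scalemxAr vnorm_frob frobZ ?invr_ge0 ?(ltW t0) // -vnorm_frob => h.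
have := ler_wpM2l (ltW t0) h; rewrite mulrA mulfV ?gt_eqF // mul1r mulrC; exact.
Qed.

Lemma f2_spec m n (M : 'M[C]_(m, n)) (x : 'cV[C]_n) :
  f2 (M *m x) <= specnorm M ^+ 2 * f2 x.
Proof.
have h := spec_bound M x; move: h; rewrite !vnorm_frob /f2 => h.
have h0 := frob_ge0 (M *m x); have h1 := frob_ge0 x.
rewrite -exprMn; nra.
Qed.

Lemma cols_bound p q k (N : 'M[C]_(p, q)) (c : R) :
  (forall v : 'cV[C]_q, f2 (N *m v) <= c * f2 v) ->
  forall Y : 'M[C]_(q, k), f2 (N *m Y) <= c * f2 Y.
Proof.
move=> h Y; rewrite f2_cols [f2 Y]f2_cols mulr_sumr; apply: ler_sum => j _.
by rewrite colE -mulmxA -colE; apply: h.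
Qed.


Lemma fro_sub m n (X Y : 'M[C]_(m, n)) :
  fro (X - Y) = fro X + fro Y - (\tr (X *m adj Y) + \tr (Y *m adj X)).
Proof.
rewrite /fro adjB mulmxBl !mulmxBr !linearB /=.
ring.
Qed.

Lemma adj_vec p q (X : 'M[C]_(p, q)) (v : 'cV[C]_p) :
  f2 (adj X *m v) <= specnorm X ^+ 2 * f2 v.
Proof.
set s2 := specnorm X ^+ 2.
have s20 : 0 <= s2 by exact: sqr_ge0.
have ha : f2 (X *m (adj X *m v)) <= s2 * f2 (adj X *m v) := f2_spec X _.
have hw : fro (adj X *m v) = \tr ((X *m (adj X *m v)) *m adj v).
  by rewrite /fro mxtrace_mulC adj_mul adjK [RHS]mxtrace_mulC !mulmxA.
have hw' : \tr (v *m adj (X *m (adj X *m v))) = fro (adj X *m v).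
  rewrite -[v in \tr (v *m _)]adjK -adj_mul tr_adj -hw -f2C.
  exact: conj_realC.
have key : f2 (X *m (adj X *m v) - (s2%:C)%C *: v)
   = f2 (X *m (adj X *m v)) + s2 ^+ 2 * f2 v - 2 * s2 * f2 (adj X *m v).
  apply: (@complexI R); rewrite f2C fro_sub -[fro (_ *: v)]f2C f2Z.
  rewrite adjZ conj_realC -scalemxAr -scalemxAl !mxtraceZ -hw hw' -!f2C.
  rewrite [in RHS]rmorphB [in RHS]rmorphD !rmorphM rmorph_nat.
  ring.
have k0 := f2_ge0 (X *m (adj X *m v) - (s2%:C)%C *: v); rewrite key in k0.
have [s2e|s2n] := eqVneq s2 0.
  rewrite s2e mul0r in ha.
  have ha0 : f2 (X *m (adj X *m v)) = 0 by apply/le_anti; rewrite ha f2_ge0.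
  have a0 := f2_eq0 ha0.
  have -> : f2 (adj X *m v) = 0.
    by apply: (@complexI R); rewrite f2C hw a0 mul0mx mxtrace0 ?rmorph0.
  by rewrite s2e mul0r.
have s2p : 0 < s2 by rewrite lt_def s2n s20.
nra.
Qed.

Lemma f2_mulL p q k (X : 'M[C]_(p, q)) (Y : 'M[C]_(q, k)) :
  f2 (X *m Y) <= specnorm X ^+ 2 * f2 Y.
Proof. exact: cols_bound (f2_spec X) Y. Qed.

Lemma f2_mulR k p q (Y : 'M[C]_(k, p)) (X : 'M[C]_(p, q)) :
  f2 (Y *m X) <= specnorm X ^+ 2 * f2 Y.
Proof.
rewrite -f2_adj adj_mul -[f2 Y]f2_adj; exact: cols_bound (adj_vec X) _.
Qed.


Lemma gram_eq0 p q (N : 'M[C]_(p, q)) : N *m adj N = 0 -> N = 0.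
Proof. by move=> h; apply: fro_eq0; rewrite /fro h mxtrace0. Qed.

Lemma unit_gram r k (N : 'M[C]_(r, k)) : row_free N -> N *m adj N \in unitmx.
Proof.
move=> hN; rewrite -row_free_unit; apply: inj_row_free => u h.
have : (u *m N) *m adj (u *m N) = 0.
  by rewrite adj_mul mulmxA -(mulmxA u N) h mul0mx.
move/gram_eq0 => h2; apply/eqP; rewrite -(mulmx_free_eq0 _ hN) h2 //.
Qed.

Lemma MP_fact m n r (F : 'M[C]_(m, r)) (G : 'M[C]_(r, n)) :
  row_free G -> row_free (adj F) -> exists X, is_MP_inverse (F *m G) X.
Proof.
move=> hG hF.
have uG := unit_gram hG.
have uF : adj F *m F \in unitmx by have := unit_gram hF; rewrite adjK.
set KG := invmx (G *m adj G); set KF := invmx (adj F *m F).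
have hKG : adj KG = KG by rewrite /KG adj_inv adj_mul adjK.
have hKF : adj KF = KF by rewrite /KF adj_inv adj_mul adjK.
have eG : G *m adj G *m KG = 1%:M := mulmxV uG.
have eF : KF *m (adj F *m F) = 1%:M := mulVmx uF.
exists (adj G *m KG *m KF *m adj F).
have hAX : F *m G *m (adj G *m KG *m KF *m adj F) = F *m KF *m adj F.
  rewrite !mulmxA.
  by rewrite -(mulmxA F G) -(mulmxA F (G *m adj G)) eG mulmx1.
have hXA : (adj G *m KG *m KF *m adj F) *m (F *m G) = adj G *m KG *m G.
  rewrite !mulmxA -(mulmxA (adj G *m KG *m KF) (adj F) F).
  by rewrite -(mulmxA (adj G *m KG) KF) eF mulmx1.
split.
- rewrite hAX !mulmxA -(mulmxA (F *m KF) (adj F) F) -(mulmxA F KF) eF.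
  by rewrite mulmx1.
- rewrite hXA !mulmxA -(mulmxA (adj G *m KG) G (adj G)).
  by rewrite -(mulmxA (adj G *m KG) (G *m adj G) KG) eG mulmx1.
- by rewrite hAX !adj_mul adjK hKF mulmxA.
- by rewrite hXA !adj_mul adjK hKG mulmxA.
Qed.

Lemma MP_exists m n (A : 'M[C]_(m, n)) : exists X, is_MP_inverse A X.
Proof.
rewrite -(mulmx_base A); apply: MP_fact; first exact: row_base_free.
by rewrite /row_free /ctrmx mxrank_tr mxrank_map; exact: col_base_full.
Qed.

Lemma pinvP m n (A : 'M[C]_(m, n)) : is_MP_inverse A (pinv A).
Proof. exact: (xgetPex 0 (MP_exists A)). Qed.


Lemma arith (x t2 t3 a b p1 r3 q1 r2 wa wb : R) : t2 <= b * r2 -> t3 <= a * r3 ->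
  0 <= a * (p1 - wb) -> 0 <= b * (q1 - wa) ->
  x + t2 + t3 <= a * (p1 + r3 - wb) + b * (q1 + r2 - wa) + x.
Proof. move=> *; nra. Qed.

Lemma subr_ge0_of (x y : R) : x <= y -> 0 <= y - x.
Proof. by rewrite subr_ge0. Qed.

Lemma main_ineq m n (A B : 'M[C]_(m, n)) (Ad Bd : 'M[C]_(n, m)) :
  is_MP_inverse A Ad -> is_MP_inverse B Bd ->
  f2 (Bd - Ad) <=
    specnorm Ad ^+ 2 * (f2 (Ad *m (B - A)) - f2 (Ad *m (B - A) *m Bd) / specnorm Bd ^+ 2)
  + specnorm Bd ^+ 2 * (f2 ((B - A) *m Bd) - f2 (Ad *m (B - A) *m Bd) / specnorm Ad ^+ 2)
  + f2 (Bd *m (B - A) *m Ad).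
Proof.
move=> [a1 a2 a3 a4] [b1 b2 b3 b4].
set E := B - A.
set P := Bd *m B; set Q := A *m Ad.
have hQ : adj Q = Q := a3.
have hP : adj P = P := b4.
have hQ1 : adj (1%:M - Q) = 1%:M - Q by rewrite adjB adj1 hQ.
have hP1 : adj (1%:M - P) = 1%:M - P by rewrite adjB adj1 hP.
have QQ : Q *m Q = Q by rewrite /Q mulmxA a1.
have PP : P *m P = P by rewrite /P mulmxA b2.
have AdQ : Ad *m (1%:M - Q) = 0 by rewrite mulmxBr mulmx1 /Q mulmxA a2 subrr.
have PBd : (1%:M - P) *m Bd = 0 by rewrite mulmxBl mul1mx /P b2 subrr.
have QA : (1%:M - Q) *m A = 0 by rewrite mulmxBl mul1mx /Q a1 subrr.
have BP : B *m (1%:M - P) = 0 by rewrite mulmxBr mulmx1 /P mulmxA b1 subrr.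
have QQ1 : (1%:M - Q) *m Q = 0 by rewrite mulmxBl mul1mx QQ subrr.
have PP1 : P *m (1%:M - P) = 0 by rewrite mulmxBr mulmx1 PP subrr.
set T1 := - (Bd *m E *m Ad).
set T2 := Bd *m (1%:M - Q).
set T3 := - ((1%:M - P) *m Ad).
have hD : Bd - Ad = T1 + T2 + T3.
  rewrite /T1 /T2 /T3 /E /Q /P mulmxBr mulmxBl !mulmxBr !mulmxBl mulmx1 mul1mx !mulmxA.
  set x := Bd *m B *m Ad; set y := Bd *m A *m Ad.
  apply/matrixP => i j; rewrite !mxE; ring.
have O1 : T1 *m adj T2 = 0.
  rewrite /T1 /T2 adj_mul hQ1 mulNmx mulmxA -(mulmxA (Bd *m E) Ad) AdQ.
  by rewrite mulmx0 mul0mx oppr0.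
have PT : (1%:M - P) *m (T1 + T2) = 0.
  by rewrite mulmxDr /T1 /T2 mulmxN !mulmxA PBd !mul0mx oppr0 add0r.
have O2 : adj T3 *m (T1 + T2) = 0.
  by rewrite /T3 adjN adj_mul hP1 mulNmx -mulmxA PT mulmx0 oppr0.
have hf : f2 (Bd - Ad) = f2 (Bd *m E *m Ad) + f2 T2 + f2 ((1%:M - P) *m Ad).
  by rewrite hD f2_pyth2 // f2_pyth1 // /T1 /T3 !f2_N.
have kE : adj E *m (1%:M - Q) = adj B *m (1%:M - Q).
  rewrite /E adjB mulmxBl.
  have : adj ((1%:M - Q) *m A) = 0 by rewrite QA adj0.
  by rewrite adj_mul hQ1 => ->; rewrite subr0.
have kB : Bd *m adj Bd *m adj B = Bd by rewrite -mulmxA -adj_mul b3 mulmxA b2.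
have eT2 : T2 = Bd *m adj ((1%:M - Q) *m E *m Bd).
  by rewrite /T2 !adj_mul hQ1 kE !mulmxA kB.
have hT2 : f2 T2 <= specnorm Bd ^+ 2 * f2 ((1%:M - Q) *m E *m Bd).
  by rewrite eT2 -[f2 ((1%:M - Q) *m E *m Bd)]f2_adj; exact: f2_mulL.
have pyE : f2 (E *m Bd) = f2 (Q *m E *m Bd) + f2 ((1%:M - Q) *m E *m Bd).
  have -> : E *m Bd = Q *m E *m Bd + (1%:M - Q) *m E *m Bd.
    by rewrite (mulmxBl 1%:M Q E) mul1mx (mulmxBl E (Q *m E) Bd) [in RHS]addrC subrK.
  apply: f2_pyth2; rewrite !adj_mul hQ1 !mulmxA.
  by rewrite -(mulmxA (adj Bd *m adj E) (1%:M - Q) A) QA mulmx0 !mul0mx.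
have hw1 : f2 (Ad *m E *m Bd) <= specnorm Ad ^+ 2 * f2 (Q *m E *m Bd).
  have -> : Ad *m E *m Bd = Ad *m (Q *m E *m Bd) by rewrite /Q !mulmxA a2.
  exact: f2_mulL.
have kE2 : (1%:M - P) *m adj E = - ((1%:M - P) *m adj A).
  rewrite /E adjB mulmxBr.
  have : adj (B *m (1%:M - P)) = 0 by rewrite BP adj0.
  by rewrite adj_mul hP1 => ->; rewrite sub0r.
have kA : adj A *m (adj Ad *m Ad) = Ad by rewrite mulmxA -adj_mul a4 a2.
have eT3 : f2 ((1%:M - P) *m Ad) = f2 (adj (Ad *m E *m (1%:M - P)) *m Ad).
  by rewrite !adj_mul hP1 !mulmxA kE2 !mulNmx f2_N -!mulmxA kA.
have hT3 : f2 ((1%:M - P) *m Ad) <= specnorm Ad ^+ 2 * f2 (Ad *m E *m (1%:M - P)).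
  by rewrite eT3 -[f2 (Ad *m E *m (1%:M - P))]f2_adj; exact: f2_mulR.
have pyA : f2 (Ad *m E) = f2 (Ad *m E *m P) + f2 (Ad *m E *m (1%:M - P)).
  rewrite {1}(_ : Ad *m E = Ad *m E *m P + Ad *m E *m (1%:M - P)); last first.
    by rewrite (mulmxBr (Ad *m E) 1%:M P) mulmx1 [in RHS]addrC subrK.
  apply: f2_pyth1; rewrite adj_mul hP1 !mulmxA.
  by rewrite -(mulmxA (Ad *m E *m Bd) B (1%:M - P)) BP mulmx0 mul0mx.
have hw2 : f2 (Ad *m E *m Bd) <= specnorm Bd ^+ 2 * f2 (Ad *m E *m P).
  have -> : Ad *m E *m Bd = Ad *m E *m P *m Bd.
    by rewrite -(mulmxA (Ad *m E) P Bd) /P b2.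
  exact: f2_mulR.
rewrite hf.
set a := specnorm Ad ^+ 2; set b := specnorm Bd ^+ 2.
have ha0 : 0 <= a by exact: sqr_ge0.
have hb0 : 0 <= b by exact: sqr_ge0.
have hqa : f2 (Ad *m E *m Bd) / a <= f2 (Q *m E *m Bd).
  have [->|an] := eqVneq a 0; first by rewrite invr0 mulr0 f2_ge0.
  by rewrite ler_pdivrMr ?lt_def ?an // mulrC.
have hpb : f2 (Ad *m E *m Bd) / b <= f2 (Ad *m E *m P).
  have [->|bn] := eqVneq b 0; first by rewrite invr0 mulr0 f2_ge0.
  by rewrite ler_pdivrMr ?lt_def ?bn // mulrC.
have m1 := mulr_ge0 ha0 (subr_ge0_of hpb).
have m2 := mulr_ge0 hb0 (subr_ge0_of hqa).
rewrite pyE pyA; exact: arith hT2 hT3 m1 m2.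
Qed.

End Aux.

Unset Implicit Arguments.

Theorem corollary3p4 (R : realType) (m n r s : nat) (A B : 'M[R[i]]_(m, n))
  (hA : \rank A = r) (hB : \rank B = s) :
  let E := B - A in
  let Ad := pinv A in
  let Bd := pinv B in
  let gamma1 :=
    specnorm Ad ^+ 2 * (frobnorm (Ad *m E) ^+ 2
                        - frobnorm (Ad *m E *m Bd) ^+ 2 / specnorm Bd ^+ 2)
    + specnorm Bd ^+ 2 * (frobnorm (E *m Bd) ^+ 2
                        - frobnorm (Ad *m E *m Bd) ^+ 2 / specnorm Ad ^+ 2) in
  let gamma2 :=
    specnorm Ad ^+ 2 * (frobnorm (E *m Ad) ^+ 2
                        - frobnorm (Bd *m E *m Ad) ^+ 2 / specnorm Bd ^+ 2)
    + specnorm Bd ^+ 2 * (frobnorm (Bd *m E) ^+ 2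
                        - frobnorm (Bd *m E *m Ad) ^+ 2 / specnorm Ad ^+ 2) in
  frobnorm (Bd - Ad) ^+ 2
    <= Num.min (gamma1 + frobnorm (Bd *m E *m Ad) ^+ 2)
               (gamma2 + frobnorm (Ad *m E *m Bd) ^+ 2).
Proof.
cbv zeta.
have h1 := main_ineq (pinvP A) (pinvP B).
have h2 := main_ineq (pinvP B) (pinvP A).
rewrite le_min; apply/andP; split; first exact: h1.
have eAB : A - B = - (B - A) by rewrite opprB.
move: h2; rewrite eAB !mulmxN !mulNmx !f2_N -opprB f2_N /f2.
move=> h; apply: le_trans h _.
by rewrite [X in X + _ <= _]addrC.
Qed.
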